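(* Let $\mathcal{T}=(\mathcal{V},\mathcal{E})$ obey the LC-PF model and covariance assumption of the context, with $\Omega_p(c,c)+\Omega_q(c,c)>0$ for every non-root node $c$. Let $\mathcal{M}\subset\mathcal{V}$ be a set of non-root (''missing'') nodes, each of degree at most $2$ in $\mathcal{T}$, and let $\mathcal{O}=\mathcal{V}\setminus\mathcal{M}$ be the observed nodes. Let $\mathcal{T}_{\mathcal{M}}$ be the minimum weight spanning tree of the complete graph on $\mathcal{O}$ with edge weights $\phi_{ab}$. Then every edge of $\mathcal{T}$ joining two observed nodes is an edge of $\mathcal{T}_{\mathcal{M}}$. Every other (spurious) edge of $\mathcal{T}_{\mathcal{M}}$ joins two observed nodes that are separated in $\mathcal{T}$ by missing nodes, i.e. whose connecting path in $\mathcal{T}$ has all interior nodes in $\mathcal{M}$.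
   Context: $\mathcal{T}=(\mathcal{V},\mathcal{E})$ is a tree with a distinguished root node (the substation) of degree one. Each edge $(ab)$ has resistance $r_{ab}>0$ and reactance $x_{ab}>0$. Let $H_{1/r}$ (resp. $H_{1/x}$) be the weighted Laplacian of $\mathcal{T}$ with edge weights $1/r_{ab}$ (resp. $1/x_{ab}$), with the root row and column removed. Non-root nodes have random injections $p_a,q_a$. The LC-PF model gives the voltage magnitude deviations $v=H_{1/r}^{-1}p+H_{1/x}^{-1}q$ and phases $\theta=H_{1/x}^{-1}p-H_{1/r}^{-1}q$ at non-root nodes; the root voltage is constant. Covariance assumption: with $\Omega_p,\Omega_q$ the covariances of $p,q$ and $\Omega_{pq}=\mathbb{E}[(p-\mathbb{E}p)(q-\mathbb{E}q)^T]=\Omega_{qp}^T$, for distinct non-root $a,b$ we have $\Omega_p(a,b)=\Omega_q(a,b)=\Omega_{qp}(a,b)=0$, and $\Omega_{qp}(a,a)\ge0$. Define $\phi_{ab}=\mathbb{E}[((v_a-\mathbb{E}v_a)-(v_b-\mathbb{E}v_b))^2]$. *)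

(* Defs.v *)
(* Vertices of the tree are 'I_n.+1, the root (substation) is ord0;
   non-root nodes are indexed by 'I_n via lift ord0. *)
From HB Require Import structures.
From mathcomp Require Import all_boot all_order all_algebra.
Set Implicit Arguments. Unset Strict Implicit. Unset Printing Implicit Defensive.
Import Order.TTheory GRing.Theory Num.Theory.
Local Open Scope ring_scope.

Section Defs.
Variables (R : realFieldType) (n : nat).
Notation V := 'I_n.+1.

Definition degree (E : rel V) (a : V) : nat := #|[set b | E a b]|.

Definition is_tree_on (O : {set V}) (E : rel V) : Prop :=
  [/\ symmetric E, irreflexive E,
      (forall a b, E a b -> (a \in O) && (b \in O)),
      (forall a b, a \in O -> b \in O -> connect E a b) &
      #|[set p : V * V | E p.1 p.2]| = (#|O|.-1).*2 ]%N.

Definition is_tree (E : rel V) : Prop := is_tree_on [set: V] E.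

Definition laplacian (E : rel V) (w : V -> V -> R) : 'M[R]_n.+1 :=
  \matrix_(a, b) (if a == b then \sum_(c | E a c) (w a c)^-1
                  else if E a b then - (w a b)^-1 else 0).

Definition red_laplacian (E : rel V) (w : V -> V -> R) : 'M[R]_n :=
  \matrix_(i, j) laplacian E w (lift ord0 i) (lift ord0 j).

(* Covariance matrix of the non-root voltage-magnitude deviations
   v = H_{1/r}^{-1} p + H_{1/x}^{-1} q, where Op = Cov(p), Oq = Cov(q),
   Opq = E[(p - Ep)(q - Eq)^T] and Oqp = Opq^T. *)
Definition cov_v (E : rel V) (r x : V -> V -> R) (Op Oq Opq : 'M[R]_n) : 'M[R]_n :=
  let A := invmx (red_laplacian E r) in
  let B := invmx (red_laplacian E x) in
  A *m Op *m A^T + B *m Oq *m B^T + A *m Opq *m B^T + B *m Opq^T *m A^T.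

(* covariance of the voltage deviations, extended to all nodes
   (the root voltage is constant, hence has zero covariance) *)
Definition cov_V (E : rel V) (r x : V -> V -> R) (Op Oq Opq : 'M[R]_n) (a b : V) : R :=
  match unlift ord0 a, unlift ord0 b with
  | Some i, Some j => cov_v E r x Op Oq Opq i j
  | _, _ => 0
  end.

(* phi_ab = E[((v_a - E v_a) - (v_b - E v_b))^2] *)
Definition phi (E : rel V) (r x : V -> V -> R) (Op Oq Opq : 'M[R]_n) (a b : V) : R :=
  cov_V E r x Op Oq Opq a a + cov_V E r x Op Oq Opq b b
  - 2 * cov_V E r x Op Oq Opq a b.

(* (Op, Oq, Opq) is a valid joint covariance structure of (p, q): the joint
   covariance matrix [[Op, Opq], [Opq^T, Oq]] is symmetric positive semidefinite *)
Definition joint_cov (Op Oq Opq : 'M[R]_n) : Prop :=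
  [/\ Op^T = Op, Oq^T = Oq &
      forall u w : 'cV[R]_n,
        0 <= (u^T *m Op *m u + w^T *m Oq *m w + (u^T *m Opq *m w) *+ 2) 0 0].

Definition graph_weight (F : rel V) (wt : V -> V -> R) : R :=
  \sum_(a : V) \sum_(b : V | F a b && (a < b)%N) wt a b.

Definition is_MST (O : {set V}) (wt : V -> V -> R) (F : rel V) : Prop :=
  is_tree_on O F /\
  forall F' : rel V, is_tree_on O F' -> graph_weight F wt <= graph_weight F' wt.

End Defs.

(* Main.v *)
Require Import Defs.
From HB Require Import structures.
From mathcomp Require Import all_boot all_order all_algebra.
From mathcomp Require Import zify ring lra.
Set Implicit Arguments. Unset Strict Implicit. Unset Printing Implicit Defensive.
Import Order.TTheory GRing.Theory Num.Theory.

Section Dist.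
Variables (T : finType) (G : rel T) (r : T).

Definition Pth (v : T) (k : nat) : bool :=
  [exists t : k.-tuple T, path G v t && (last v t == r)].
Definition Pc v k := ~~ connect G v r || Pth v k.

Lemma Pc_ex v : exists k, Pc v k.
Proof.
rewrite /Pc; case: (boolP (connect G v r)) => [/connectP [p pp lp]|_]; last by exists 0.
exists (size p); apply/existsP; exists (in_tuple p) => /=; by rewrite pp -lp eqxx.
Qed.

Definition dist v := ex_minn (Pc_ex v).

Lemma dist_spec v : connect G v r -> exists2 p, path G v p & (last v p = r /\ size p = dist v).
Proof.
move=> cv; rewrite /dist; case: ex_minnP => k; rewrite /Pc cv /= => /existsP [t /andP [pt /eqP lt]] _.
by exists t; rewrite ?size_tuple.
Qed.

Lemma dist_min v p : path G v p -> last v p = r -> (dist v <= size p)%N.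
Proof.
move=> pp lp; rewrite /dist; case: ex_minnP => k _; apply.
rewrite /Pc; apply/orP; right; apply/existsP; exists (in_tuple p); by rewrite /= pp lp eqxx.
Qed.

Lemma dist_root : dist r = 0%N.
Proof. by apply/eqP; rewrite -leqn0 (dist_min (p:=[::])). Qed.

Lemma dist0 v : connect G v r -> dist v = 0%N -> v = r.
Proof. move=> cv d0; case: (dist_spec cv) => p _ [lp sp]; move: sp lp; rewrite d0; case: p => //. Qed.

Lemma dist_edge v w : G v w -> connect G w r -> (dist v <= (dist w).+1)%N.
Proof.
move=> e cw; case: (dist_spec cw) => p pp [lp sp].
by rewrite -sp (dist_min (p := w :: p)) //= e pp.
Qed.

Lemma dist_next v : connect G v r -> v != r -> exists2 w, G v w & (dist w < dist v)%N.
Proof.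
move=> cv nr; case: (dist_spec cv) => [[|w p]] /=; first by move=> _ [lp _]; rewrite lp eqxx in nr.
move=> /andP [e pp] [lp sp]; exists w => //.
rewrite -sp ltnS; exact: dist_min.
Qed.

Definition nxt v := if v == r then r else odflt r [pick w | G v w && (dist w < dist v)%N].

Lemma nxtP v : connect G v r -> v != r -> G v (nxt v) && (dist (nxt v) < dist v)%N.
Proof.
move=> cv nr; rewrite /nxt (negbTE nr); case: pickP => [w //|H].
case: (dist_next cv nr) => w e lt; by move: (H w); rewrite e lt.
Qed.
End Dist.

Definition edges (T : finType) (G : rel T) := [set p : T * T | G p.1 p.2].

Lemma edges_lb (T : finType) (O : {set T}) (G : rel T) : symmetric G ->
  (forall a b, a \in O -> b \in O -> connect G a b) ->
  ((#|O|.-1).*2 <= #|edges G|)%N.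
Proof.
move=> sG cG.
case: (set_0Vmem O) => [->|[r0 rO]]; first by rewrite cards0.
pose f (p : T * bool) := if p.2 then (p.1, nxt G r0 p.1) else (nxt G r0 p.1, p.1).
have Hn : forall v, v \in O :\ r0 -> G v (nxt G r0 v) && (dist G r0 (nxt G r0 v) < dist G r0 v)%N.
  move=> v; rewrite in_setD1 => /andP [vr vO]; apply: nxtP => //; exact: cG.
have inj : {in setX (O :\ r0) [set: bool] &, injective f}.
  move=> [v b] [v' b'] /setXP [Hv _] /setXP [Hv' _].
  move: (Hn _ Hv) (Hn _ Hv') => /andP [_ l1] /andP [_ l2].
  rewrite /f; case: b; case: b' => /=.
  - by case=> ->.
  - move=> [e1 e2]; exfalso; rewrite e2 in l1; rewrite -e1 in l2; lia.
  - move=> [e1 e2]; exfalso; rewrite e1 in l1; rewrite -e2 in l2; lia.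
  - by case=> _ ->.
have sub : [set f x | x in setX (O :\ r0) [set: bool]] \subset edges G.
  apply/subsetP => _ /imsetP [[v b] /setXP [Hv _] ->]; rewrite inE /f.
  by case: b => /=; move: (Hn _ Hv) => /andP [] //; rewrite sG.
move: (subset_leq_card sub); rewrite (card_in_imset inj) cardsX cardsT card_bool.
by rewrite (cardsD1 r0 O) rO /= muln2.
Qed.

Definition rem_e (T : eqType) (F : rel T) (u v : T) : rel T :=
  fun a b => F a b && ~~ (((a == u) && (b == v)) || ((a == v) && (b == u))).

Definition add_e (T : eqType) (F : rel T) (p q : T) : rel T :=
  fun a b => F a b || ((a == p) && (b == q)) || ((a == q) && (b == p)).

Definition tree_on (T : finType) (O : {set T}) (F : rel T) :=
  [/\ symmetric F, irreflexive F,
      (forall a b, F a b -> (a \in O) && (b \in O)),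
      (forall a b, a \in O -> b \in O -> connect F a b) &
      #|edges F| = (#|O|.-1).*2 ]%N.

Section Trees.
Variables (T : finType).
Implicit Types (F : rel T) (O : {set T}).

Lemma rem_sym F u v : symmetric F -> symmetric (rem_e F u v).
Proof.
move=> sF a b; rewrite /rem_e sF; congr (_ && ~~ _).
by case: (a == u); case: (a == v); case: (b == u); case: (b == v).
Qed.

Lemma rem_sub F u v a b : rem_e F u v a b -> F a b.
Proof. by case/andP. Qed.

Lemma rem_edges F u v : edges (rem_e F u v) = (edges F :\ (u, v)) :\ (v, u).
Proof.
apply/setP => [[a b]]; rewrite !inE /rem_e /= !xpair_eqE.
by case: (F a b); case: (a == u); case: (a == v); case: (b == u); case: (b == v).
Qed.

Lemma rem_card F u v : symmetric F -> irreflexive F -> F u v ->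
  #|edges (rem_e F u v)| = (#|edges F| - 2)%N.
Proof.
move=> sF iF e; rewrite rem_edges.
have uv : u != v by apply: contraTneq e => ->; rewrite iF.
rewrite [in RHS](cardsD1 (u, v)) inE e [in RHS](cardsD1 (v, u)) !inE xpair_eqE sF e.
by rewrite eq_sym (negbTE uv) /=; lia.
Qed.

Lemma TL O F u v : tree_on O F -> F u v -> ~~ connect (rem_e F u v) u v.
Proof.
case=> sF iF inO cF cardF e; apply/negP => c.
have sG := rem_sym u v sF.
have cG : forall a b, a \in O -> b \in O -> connect (rem_e F u v) a b.
  move=> a b aO bO; apply: (connect_sub _ (cF a b aO bO)) => x y exy.
  case nuv: (((x == u) && (y == v)) || ((x == v) && (y == u))).
    case/orP: nuv => /andP [/eqP -> /eqP ->] //.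
    by rewrite (sym_connect_sym sG).
  by apply: connect1; rewrite /rem_e exy nuv.
have h : (0 < #|edges F|)%N by apply/card_gt0P; exists (u,v); rewrite inE.
move: (edges_lb sG cG); rewrite rem_card // cardF; rewrite cardF in h; lia.
Qed.

Lemma reach F u v w p : path F w p -> (last w p == u) || (last w p == v) ->
  connect (rem_e F u v) w u || connect (rem_e F u v) w v.
Proof.
elim: p w => [|y p IH] w /=.
  by move=> _ /orP [/eqP->|/eqP->]; rewrite connect0 ?orbT.
move=> /andP [e pp] l.
case wu: (w == u); first by rewrite (eqP wu) connect0.
case wv: (w == v); first by rewrite (eqP wv) connect0 orbT.
have g : rem_e F u v w y by rewrite /rem_e e wu wv.
by case/orP: (IH y pp l) => c; apply/orP; [left|right]; exact: connect_trans (connect1 g) c.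
Qed.

Lemma reachO O F u v w : tree_on O F -> F u v -> w \in O ->
  connect (rem_e F u v) w u || connect (rem_e F u v) w v.
Proof.
case=> sF iF inO cF _ e wO; move: (inO _ _ e) => /andP [uO _].
case/connectP: (cF _ _ wO uO) => p pp lp; apply: (reach pp); by rewrite -lp eqxx.
Qed.

Lemma cross F (S : {pred T}) : forall p x, path F x p -> uniq (x :: p) -> x \in S -> last x p \notin S ->
  exists u v, [/\ F u v, u \in S, v \notin S, connect (rem_e F u v) x u & connect (rem_e F u v) v (last x p)].
Proof.
elim => [|y p IH] x /=; first by move=> _ _ ->.
move=> /andP [e pp] /andP [xn up] xS lS.
case yS: (y \in S).
  case: (IH y pp up yS lS) => u [v [euv uS vS c1 c2]]; exists u, v; split=> //.
  apply: connect_trans _ c1; apply: connect1; rewrite /rem_e e /=.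
  have xv : x != v by apply: contraNneq vS => <-.
  have yv : y != v by apply: contraNneq vS => <-.
  by rewrite (negbTE xv) (negbTE yv) !andbF.
exists x, y; split=> //; first by rewrite yS.
apply/connectP; exists p => //.
apply: (sub_in_path (P := [pred z | z != x])) _ _ pp.
  move=> a b; rewrite !inE => an bn eab; by rewrite /rem_e eab (negbTE an) (negbTE bn) andbF.
apply/allP => z zin; rewrite inE; by apply: contraNneq xn => <-.
Qed.

Lemma add_card (H : rel T) (p q : T) : p != q -> ~~ H p q -> ~~ H q p -> #|edges (add_e H p q)| = (#|edges H|).+2.
Proof.
move=> pq h1 h2.
have -> : edges (add_e H p q) = (p,q) |: ((q,p) |: edges H).
  apply/setP => [[a b]]; rewrite !inE /add_e /= !xpair_eqE.
  by case: (H a b); case: (a==p); case: (a==q); case: (b==p); case: (b==q).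
rewrite cardsU1 cardsU1 !inE /= !xpair_eqE (negbTE h1) (negbTE h2) (negbTE pq) eq_sym (negbTE pq).
done.
Qed.

Lemma add_rem_edges F u v : symmetric F -> F u v -> edges (add_e (rem_e F u v) u v) = edges F.
Proof.
move=> sF e; apply/setP => [[a b]]; rewrite !inE /add_e /rem_e /=.
apply/idP/idP.
  case/orP => [/orP [/andP [h _]|/andP [/eqP -> /eqP ->]]|/andP [/eqP -> /eqP ->]] //; by rewrite sF.
move=> h; case hA: ((a == u) && (b == v)); first by rewrite orbT.
case hB: ((a == v) && (b == u)); first by rewrite orbT.
by rewrite h.
Qed.

Lemma exch O F u v p q : tree_on O F -> F u v -> p \in O -> q \in O -> p != q -> ~~ F p q ->
  connect (rem_e F u v) u p -> connect (rem_e F u v) v q -> tree_on O (add_e (rem_e F u v) p q).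
Proof.
move=> tF; case: (tF) => sF iF inO cF cardF e pO qO pq npq c1 c2.
set G := rem_e F u v. have sG : symmetric G := rem_sym u v sF.
have sF' : symmetric (add_e G p q).
  move=> a b; rewrite /add_e sG.
  by case: (G b a); case: (a==p); case: (a==q); case: (b==p); case: (b==q).
have GF' : forall a b, connect G a b -> connect (add_e G p q) a b.
  move=> a b; apply: connect_sub => x y gxy; apply: connect1; by rewrite /add_e gxy.
have nGpq : ~~ G p q by apply: contra npq; apply: rem_sub.
have nGqp : ~~ G q p by rewrite sG.
have uv : u != v by apply: contraTneq e => ->; rewrite iF.
split=> //.
- move=> a; rewrite /add_e /G /rem_e iF /=; apply/negP; case/orP => /andP [/eqP e1 /eqP e2];
    by move: pq; rewrite -e1 -e2 eqxx.
- move=> a b; rewrite /add_e; case/orP; first case/orP.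
  + by move/rem_sub; apply: inO.
  + by case/andP => /eqP -> /eqP ->; rewrite pO qO.
  + by case/andP => /eqP -> /eqP ->; rewrite pO qO.
- have cuv : connect (add_e G p q) u v.
    apply: connect_trans (GF' _ _ c1) _; apply: connect_trans (connect1 (_ : add_e G p q p q)) _.
      by rewrite /add_e !eqxx orbT.
    by apply: GF'; rewrite (sym_connect_sym sG).
  move=> a b aO bO; apply: (connect_sub _ (cF a b aO bO)) => x y exy.
  case gxy: (G x y); first by apply: connect1; rewrite /add_e gxy.
  move: gxy; rewrite /G /rem_e exy /= => /negbFE; case/orP => /andP [/eqP -> /eqP ->] //.
  by rewrite (sym_connect_sym sF').
- rewrite add_card // -cardF -(add_rem_edges sF e) add_card //; rewrite /G /rem_e !eqxx /= ?andbF ?orbT ?andbT //. by rewrite andbF.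
Qed.
End Trees.

Local Open Scope ring_scope.

Section GW.
Variables (R : realFieldType) (n : nat).
Notation V := 'I_n.+1.

Lemma dd (x y : V) (c : R) : \sum_(a : V) \sum_(b : V) (if (a == x) && (b == y) then c else 0) = c.
Proof.
rewrite (bigD1 x) //= [X in _ + X]big1 ?addr0; last first.
  by move=> a ax; apply: big1 => b _; rewrite (negbTE ax).
rewrite (bigD1 y) //= !eqxx /= [X in _ + X]big1 ?addr0 // => b hb; by rewrite (negbTE hb).
Qed.

Lemma pairsum (x y : V) (wt : V -> V -> R) : (forall a b, wt a b = wt b a) -> x != y ->
  \sum_(a : V) \sum_(b : V) (if (((a == x) && (b == y)) || ((a == y) && (b == x))) && (a < b)%N then wt a b else 0)
  = wt x y.
Proof.
move=> sw xy.
transitivity (\sum_(a : V) \sum_(b : V) ((if (a == x) && (b == y) then (if (x < y)%N then wt x y else 0) else 0)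
   + (if (a == y) && (b == x) then (if (y < x)%N then wt y x else 0) else 0))).
  apply: eq_bigr => a _; apply: eq_bigr => b _.
  case h1: ((a == x) && (b == y)).
    move/andP: h1 => [/eqP -> /eqP ->] /=; rewrite (negbTE xy) /= addr0; by case: (x < y)%N.
  case h2: ((a == y) && (b == x)).
    move/andP: h2 => [/eqP -> /eqP ->] /=; rewrite add0r; by case: (y < x)%N.
  by rewrite /= addr0; case: (a < b)%N.
under eq_bigr do rewrite big_split /=.
rewrite big_split /= !dd.
case: (ltngtP x y) => h /=; rewrite ?addr0 ?add0r //. by move/eqP: xy; case; apply: val_inj.
Qed.

Lemma gw_exch (F : rel V) (wt : V -> V -> R) u v p q :
  symmetric F -> (forall a b, wt a b = wt b a) -> F u v -> u != v -> p != q -> ~~ F p q ->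
  graph_weight (add_e (rem_e F u v) p q) wt = graph_weight F wt - wt u v + wt p q.
Proof.
move=> sF sw e uv pq npq.
have gw : forall H, graph_weight H wt = \sum_(a : V) \sum_(b : V) (if H a b && (a < b)%N then wt a b else 0).
  move=> H; rewrite /graph_weight; apply: eq_bigr => a _; by rewrite big_mkcond.
rewrite !gw -(pairsum sw uv) -(pairsum sw pq).
rewrite -sumrB -big_split /=; apply: eq_bigr => a _.
rewrite -sumrB -big_split /=; apply: eq_bigr => b _.
set A := ((a == u) && (b == v)) || ((a == v) && (b == u)).
set B := ((a == p) && (b == q)) || ((a == q) && (b == p)).
have hA : A -> F a b by case/orP => /andP [/eqP -> /eqP ->]; rewrite // sF.
have hB : B -> ~~ F a b by case/orP => /andP [/eqP -> /eqP ->]; rewrite // sF.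
rewrite /add_e /rem_e -/A.
have -> : (F a b && ~~ A || (a == p) && (b == q) || (a == q) && (b == p)) = (F a b && ~~ A || B) by rewrite /B orbA.
move: hA hB; case: (F a b); case: A; case: B; case: (a < b)%N => //= h1 h2;
  try (by move: (h1 isT)); try (by move: (h2 isT)); ring.
Qed.
End GW.

Section Rooted.
Variables (n : nat) (E : rel 'I_n.+1).
Notation V := 'I_n.+1.
Notation root := (ord0 : V).
Hypothesis tE : tree_on [set: V] E.

Lemma sE : symmetric E. Proof. by case: tE. Qed.
Lemma iE : irreflexive E. Proof. by case: tE. Qed.
Lemma conn v : connect E v root. Proof. by case: tE => _ _ _ c _; apply: c; rewrite inE. Qed.

Definition par := nxt E root.
Definition dst := dist E root.

Lemma par_root : par root = root. Proof. by rewrite /par /nxt eqxx. Qed.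

Lemma parE v : v != root -> E v (par v). Proof. by move=> h; case/andP: (nxtP (conn v) h). Qed.

Lemma dst_par v : v != root -> dst v = (dst (par v)).+1.
Proof.
move=> h; case/andP: (nxtP (conn v) h) => e lt.
have := dist_edge e (conn _); rewrite /dst /par in lt *; lia.
Qed.

Lemma dst_root : dst root = 0%N. Proof. exact: dist_root. Qed.

Lemma dst0 v : dst v = 0%N -> v = root. Proof. exact: dist0 (conn v). Qed.

Lemma dst_par' v : dst (par v) = (dst v).-1.
Proof.
case: (v =P root) => [->|/eqP h]; first by rewrite par_root dst_root.
by rewrite (dst_par h).
Qed.

Lemma nroot_dst v : (v != root) = (0 < dst v)%N.
Proof.
case: (v =P root) => [->|h]; first by rewrite dst_root.
by case: (dst v =P 0%N) => [/dst0 //|]; lia.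
Qed.

Lemma T1 a b : E a b -> (b == par a) || (a == par b).
Proof.
move=> e; apply/negPn/negP; rewrite negb_or => /andP [h1 h2].
set G := rem_e E a b.
have ch : forall v, connect G v root.
  move=> v; move: {2}(dst v) (leqnn (dst v)) => k; elim: k v => [|k IH] v hv.
    by rewrite (@dst0 v) ?connect0 //; lia.
  case: (v =P root) => [->|/eqP vr]; first by rewrite connect0.
  apply: connect_trans (IH (par v) _); last by move: (dst_par vr); lia.
  apply: connect1; rewrite /G /rem_e parE //=.
  apply/negP; case/orP => /andP [/eqP e1 /eqP e2].
    by move: h1; rewrite -e2 e1 eqxx.
  by move: h2; rewrite -e2 e1 eqxx.
have sG : symmetric G := rem_sym a b sE.
move: (TL tE e); rewrite -/G.
by rewrite (connect_trans (ch a)) // (sym_connect_sym sG) ch.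
Qed.

Lemma dst_iter k v : dst (iter k par v) = (dst v - k)%N.
Proof. elim: k => [|k IH] /=; first by rewrite subn0. by rewrite dst_par' IH; lia. Qed.

Definition anc (c w : V) : bool := (dst w <= dst c)%N && (iter (dst c - dst w) par c == w).

Lemma ancP c w : anc c w -> iter (dst c - dst w) par c = w. Proof. by case/andP => _ /eqP. Qed.

Lemma anc_refl c : anc c c. Proof. by rewrite /anc leqnn subnn eqxx. Qed.

Lemma anc_root c : anc c root.
Proof.
rewrite /anc dst_root subn0 leq0n /=; apply/eqP; apply: dst0.
by rewrite dst_iter subnn.
Qed.

Lemma anc_of_root w : anc root w = (w == root).
Proof.
rewrite /anc dst_root; case: (w =P root) => [->|/eqP h]; first by rewrite dst_root eqxx.
by rewrite leqn0; case: eqP => [/dst0 e|] //=; rewrite e eqxx in h.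
Qed.

Lemma anc_dst c w : anc c w -> (dst w <= dst c)%N. Proof. by case/andP. Qed.

Lemma anc_eq c w : anc c w -> dst w = dst c -> w = c.
Proof. by move=> h e; rewrite -(ancP h) e subnn. Qed.

Lemma anc_par a w : a != root -> anc a w = (w == a) || anc (par a) w.
Proof.
move=> ar; have da := dst_par ar.
case: (w =P a) => [->|/eqP wa] /=; first by rewrite anc_refl.
rewrite /anc da dst_par' da /=.
case: (ltnP (dst w) (dst (par a)).+1) => h /=.
  rewrite ltnS in h; rewrite h (leqW h) /=; have -> : ((dst (par a)).+1 - dst w = (dst (par a) - dst w).+1)%N by lia.
  by rewrite iterSr.
have -> : (dst w <= dst (par a))%N = false by lia.
rewrite ?andbF /=.
case: (dst w =P (dst (par a)).+1) => [e|ne]; last by have -> : (dst w <= (dst (par a)).+1)%N = false by lia.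
by rewrite e subnn /= eq_sym (negbTE wa) andbF.
Qed.

Lemma anc_par_not a : a != root -> ~~ anc (par a) a.
Proof. move=> ar; apply/negP => /anc_dst; rewrite (dst_par ar); lia. Qed.

Lemma anc_trans u w' w : anc u w' -> anc w' w -> anc u w.
Proof.
move=> h1 h2; move: (anc_dst h1) (anc_dst h2) => d1 d2.
rewrite /anc; apply/andP; split; first lia.
have -> : (dst u - dst w = (dst w' - dst w) + (dst u - dst w'))%N by lia.
by rewrite iterD (ancP h1) (ancP h2).
Qed.

Lemma anc_chain c w w' : anc c w -> anc c w' -> anc w' w || anc w w'.
Proof.
move=> h1 h2; move: (anc_dst h1) (anc_dst h2) => d1 d2.
case: (leqP (dst w) (dst w')) => h.
  apply/orP; left; rewrite /anc h /=; apply/eqP.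
  rewrite -[in RHS](ancP h1) -[in X in iter _ _ X](ancP h2) -iterD.
  by have -> : ((dst w' - dst w) + (dst c - dst w') = dst c - dst w)%N by lia.
apply/orP; right; rewrite /anc (ltnW h) /=; apply/eqP.
rewrite -[in RHS](ancP h2) -[in X in iter _ _ X](ancP h1) -iterD.
by have -> : ((dst w - dst w') + (dst c - dst w) = dst c - dst w')%N by lia.
Qed.

Lemma anc_closed c b : anc c b -> anc c (par b).
Proof. move=> h; apply: anc_trans h _; case: (b =P root) => [->|/eqP br].
  by rewrite par_root anc_refl.
by rewrite anc_par // anc_refl orbT.
Qed.

Lemma uc_ex c a : anc c a -> a != c -> exists b, [/\ b != root, par b = a & anc c b].
Proof.
move=> h ac; have da := anc_dst h.
have lt : (dst a < dst c)%N by rewrite ltn_neqAle da andbT; apply: contraNneq ac => e; rewrite (anc_eq h e).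
exists (iter (dst c - dst a).-1 par c).
have db : dst (iter (dst c - dst a).-1 par c) = (dst a).+1 by rewrite dst_iter; lia.
split.
- by rewrite nroot_dst db.
- rewrite -iterS -[in RHS](ancP h).
  by have -> : ((dst c - dst a).-1.+1 = dst c - dst a)%N by lia.
- rewrite /anc db lt /=; apply/eqP.
  by have -> : (dst c - (dst a).+1 = (dst c - dst a).-1)%N by lia.
Qed.

Lemma uc_uniq c b b' : anc c b -> anc c b' -> b != root -> b' != root -> par b = par b' -> b = b'.
Proof.
move=> h h' br br' e.
have : dst b = dst b' by rewrite (dst_par br) (dst_par br') e.
by move=> d; rewrite -(ancP h) -(ancP h') d.
Qed.

End Rooted.

Local Open Scope ring_scope.

Section Lap.
Variables (R : realFieldType) (n : nat) (E : rel 'I_n.+1).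
Notation V := 'I_n.+1.
Notation root := (ord0 : V).
Hypothesis tE : tree_on [set: V] E.
Notation par := (par E).
Notation anc := (anc E).

Definition Ab (rho : V -> R) (a c : V) : R :=
  \sum_(w | (w != root) && anc c w) rho w * (anc a w)%:R.

Lemma Ab_root rho c : Ab rho root c = 0.
Proof.
apply: big1 => w /andP [wr _]; by rewrite (anc_of_root tE) (negbTE wr) mulr0.
Qed.

Lemma sum_ind (P : pred V) (f : V -> R) a : \sum_(w | P w) f w * (w == a)%:R = if P a then f a else 0.
Proof.
rewrite big_mkcond (bigD1 a) //= eqxx mulr1 big1 ?addr0 // => w wa.
by rewrite (negbTE wa) mulr0; case: (P w).
Qed.

Lemma Ab_par rho a c : a != root -> Ab rho a c - Ab rho (par a) c = if anc c a then rho a else 0.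
Proof.
move=> ar; rewrite /Ab -sumrB.
have h : forall w, (anc a w)%:R - (anc (par a) w)%:R = (w == a)%:R :> R.
  move=> w; rewrite (anc_par tE w ar); case: (w =P a) => [->|] /=.
    by rewrite (negbTE (anc_par_not tE ar)) subr0.
  by rewrite subrr.
under eq_bigr do rewrite -mulrBr h.
by rewrite sum_ind ar.
Qed.

Variables (wr : V -> V -> R).
Hypothesis wr_sym : forall a b, wr a b = wr b a.
Hypothesis wr_pos : forall a b, E a b -> 0 < wr a b.

Definition rhoE (w : V) := wr w (par w).

Lemma step_val a b c : a != root -> E a b ->
  (wr a b)^-1 * (Ab rhoE a c - Ab rhoE b c) = if b == par a then (anc c a)%:R else - (anc c b)%:R.
Proof.
move=> ar e; have p := wr_pos e; have pn : wr a b != 0 by rewrite gt_eqF.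
case: (b =P par a) => [eb|bp].
  rewrite eb Ab_par //; case: (anc c a) => /=; last by rewrite mulr0.
  by rewrite /rhoE -eb mulVf.
case/orP: (T1 tE e) => [/eqP /bp //|/eqP ap].
have br : b != root by apply: contraNneq ar => eb; rewrite ap eb par_root.
have h := Ab_par rhoE c br; rewrite -ap in h; rewrite -opprB h; case: (anc c b) => /=; last by rewrite oppr0 mulr0.
by rewrite /rhoE -ap wr_sym mulrN mulVf // wr_sym.
Qed.

Lemma child_sum a c : a != root ->
  \sum_(b | E a b && (b != par a)) (anc c b)%:R = (anc c a && (a != c))%:R :> R.
Proof.
move=> ar.
have Q : forall b, (E a b && (b != par a) && anc c b) = [&& b != root, par b == a & anc c b].
  move=> b; apply/idP/idP.
  - case/andP => /andP [e bp] h; case/orP: (T1 tE e) => [bp'|/eqP ap]; first by rewrite bp' in bp.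
    have br : b != root by apply: contraNneq ar => eb; rewrite ap eb par_root.
    by rewrite br -ap eqxx h.
  - case/and3P => br /eqP pb h; rewrite h andbT.
    have e : E a b by rewrite -pb (sE tE) parE.
    rewrite e /=; apply/eqP => bpa.
    move: (dst_par tE br) (dst_par tE ar); rewrite pb -bpa; lia.
rewrite big_mkcond /=.
rewrite (eq_bigr (fun b => ([&& b != root, par b == a & anc c b])%:R)); last first.
  by move=> b _; rewrite -Q; case: (E a b && (b != par a)); case: (anc c b).
case h: (anc c a && (a != c)).
  case/andP: h => h1 h2; case: (uc_ex tE h1 h2) => b0 [b0r pb0 hb0].
  rewrite (eq_bigr (fun b => 1 * (b == b0)%:R)); first by rewrite sum_ind.
  move=> b _; rewrite mul1r; case: (b =P b0) => [->|nb]; first by rewrite b0r pb0 eqxx hb0.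
  case hb: [&& b != root, par b == a & anc c b] => //; exfalso; apply: nb.
  case/and3P: hb => br /eqP pb hb; apply: (uc_uniq tE hb hb0 br b0r); by rewrite pb pb0.
apply: big1 => b _; case hb: [&& b != root, par b == a & anc c b] => //.
case/and3P: hb => br /eqP pb hb.
move: h; rewrite -pb (anc_closed tE hb) /=; case: (par b =P c) => // e _.
move: (anc_dst hb) (dst_par tE br); rewrite e; lia.
Qed.

Lemma LA a c : a != root ->
  \sum_(b : V) laplacian E wr a b * Ab rhoE b c = (a == c)%:R.
Proof.
move=> ar.
have -> : \sum_(b : V) laplacian E wr a b * Ab rhoE b c
    = \sum_(b | E a b) (wr a b)^-1 * (Ab rhoE a c - Ab rhoE b c).
  rewrite (bigD1 a) //= mxE eqxx big_distrl /=.
  rewrite [in RHS](eq_bigr (fun b => (wr a b)^-1 * Ab rhoE a c + (- ((wr a b)^-1 * Ab rhoE b c)))); last first.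
    by move=> b _; rewrite mulrBr.
  rewrite big_split /=; congr (_ + _).
  rewrite big_mkcond [in RHS]big_mkcond /=; apply: eq_bigr => b _.
  rewrite mxE; case: (b =P a) => [->|/eqP ba] /=; first by rewrite (iE tE).
  rewrite eq_sym (negbTE ba); case: (E a b) => /=; [exact: mulNr | exact: mul0r].
rewrite (bigD1 (par a)) /=; last by rewrite parE.
rewrite step_val ?parE // eqxx.
rewrite (eq_bigr (fun b => - (anc c b)%:R)); last first.
  move=> b /andP [e bp]; by rewrite step_val // (negbTE bp).
rewrite sumrN child_sum //.
case: (a =P c) => [->|ac]; first by rewrite anc_refl /= subr0.
by rewrite andbT subrr.
Qed.
End Lap.

Local Open Scope ring_scope.

Section Phi.
Variables (R : realFieldType) (n : nat) (E : rel 'I_n.+1).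
Notation V := 'I_n.+1.
Notation root := (ord0 : V).
Hypothesis tE : tree_on [set: V] E.
Notation par := (par E).
Notation anc := (anc E).

Lemma inv_lap (wr : V -> V -> R) : (forall a b, wr a b = wr b a) -> (forall a b, E a b -> 0 < wr a b) ->
  invmx (red_laplacian E wr) = \matrix_(i, j) Ab E (rhoE E wr) (lift ord0 i) (lift ord0 j).
Proof.
move=> ws wp; set A := \matrix_(i, j) _.
have h : red_laplacian E wr *m A = 1%:M.
  apply/matrixP => i j; rewrite !mxE.
  transitivity (\sum_(b : V) laplacian E wr (lift ord0 i) b * Ab E (rhoE E wr) b (lift ord0 j)).
    rewrite big_ord_recl Ab_root // mulr0 add0r; apply: eq_bigr => k _; by rewrite !mxE.
  rewrite LA // ?(eq_sym _ ord0) ?neq_lift //.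
have [Lu _] := mulmx1_unit h.
by rewrite -[invmx _]mulmx1 -h mulmxA mulVmx // mul1mx.
Qed.

Lemma diag_mul m p (X : 'M[R]_(m, n)) (Y : 'M[R]_n) (Z : 'M[R]_(p, n)) : (forall i j, i != j -> Y i j = 0) ->
  forall i j, (X *m Y *m Z^T) i j = \sum_k X i k * Y k k * Z j k.
Proof.
move=> dY i j; rewrite mxE; apply: eq_bigr => k _; rewrite !mxE (bigD1 k) //= big1 ?addr0 //.
by move=> l lk; rewrite dY ?mulr0.
Qed.

Variables (r x : V -> V -> R) (Op Oq Opq : 'M[R]_n).
Hypotheses (r_sym : forall a b, r a b = r b a) (x_sym : forall a b, x a b = x b a).
Hypotheses (r_pos : forall a b, E a b -> 0 < r a b) (x_pos : forall a b, E a b -> 0 < x a b).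
Hypothesis diagO : forall i j : 'I_n, i != j -> [/\ Op i j = 0, Oq i j = 0 & Opq i j = 0].

Definition rowv (wr : V -> V -> R) (a : V) (k : 'I_n) := Ab E (rhoE E wr) a (lift ord0 k).

Definition cterm a b k :=
  rowv r a k * rowv r b k * Op k k + rowv x a k * rowv x b k * Oq k k
  + rowv r a k * rowv x b k * Opq k k + rowv x a k * rowv r b k * Opq k k.

Lemma add4E (A1 A2 A3 A4 : 'M[R]_n) i j : (A1 + A2 + A3 + A4) i j = A1 i j + A2 i j + A3 i j + A4 i j.
Proof. by rewrite !mxE. Qed.

Lemma cov_formula a b : cov_V E r x Op Oq Opq a b = \sum_k cterm a b k.
Proof.
have r0 : forall wr k, rowv wr root k = 0 by move=> wr k; rewrite /rowv Ab_root.
case: (unliftP ord0 a) => [i ->|->]; last first.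
  by rewrite /cov_V unlift_none; symmetry; apply: big1 => k _; rewrite /cterm !r0; ring.
case: (unliftP ord0 b) => [j ->|->]; last first.
  by rewrite /cov_V unlift_none; case: (unlift _ _) => *; symmetry; apply: big1 => k _; rewrite /cterm !r0; ring.
rewrite /cov_V !liftK /cov_v /= (inv_lap r_sym r_pos) (inv_lap x_sym x_pos) add4E.
rewrite !diag_mul; try (by move=> i1 j1 h; case: (diagO h));
  try (by move=> i1 j1 h; rewrite mxE; case: (diagO (_ : j1 != i1)) => //; rewrite eq_sym).
rewrite -!big_split /=; apply: eq_bigr => k _; rewrite /cterm /rowv !mxE; ring.
Qed.

Definition fterm (dr dx : R) k := dr ^+ 2 * Op k k + dx ^+ 2 * Oq k k + 2 * (dr * dx) * Opq k k.
Definition sgnD u v w : R := (anc u w)%:R - (anc v w)%:R.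
Local Notation sgn := sgnD.

Lemma phi_formula a b : phi E r x Op Oq Opq a b =
  \sum_k fterm (rowv r a k - rowv r b k) (rowv x a k - rowv x b k) k.
Proof.
rewrite /phi !cov_formula mulr_sumr -big_split /= -sumrB; apply: eq_bigr => k _.
rewrite /cterm /fterm; ring.
Qed.

Lemma rowv_diff wr a b k : rowv wr a k - rowv wr b k =
  \sum_(w | (w != root) && anc (lift ord0 k) w) rhoE E wr w * sgn a b w.
Proof. rewrite /rowv /Ab -sumrB; apply: eq_bigr => w _; by rewrite mulrBr. Qed.

Lemma sgn_root u v : sgn u v root = 0.
Proof. by rewrite /sgnD !(anc_root tE) subrr. Qed.

Lemma fin_core (s' : V -> R) (sg : R) u v w : (forall w, s' w != 0 -> s' w = sgn u v w) ->
  (sg * sgn u v w = 0 /\ sgn u v w = 0) \/ (sg * sgn u v w = 1) ->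
  [/\ 0 <= sg * s' w, sg * s' w <= sg * sgn u v w & (sgn u v w != 0 -> sg * sgn u v w = 1)].
Proof.
move=> H1 h; case: (s' w =P 0) => [->|/eqP nz].
  rewrite mulr0; case: h => [[-> ->]|->]; split=> //; by rewrite eqxx.
rewrite (H1 _ nz); case: h => [[-> ->]|->]; split=> //; by rewrite eqxx.
Qed.

Lemma mono_core u v c (s' : V -> R) : (forall w, s' w != 0 -> s' w = sgn u v w) ->
  exists sg : R, sg * sg = 1 /\ forall w, w != root -> anc c w ->
    [/\ 0 <= sg * s' w, sg * s' w <= sg * sgn u v w & (sgn u v w != 0 -> sg * sgn u v w = 1)].
Proof.
move=> H1.
case: (pickP [pred w | (w != root) && anc c w && (~~ anc u w) && anc v w]) => [w1 | none].
  rewrite /= => /andP [/andP [/andP [w1r cw1] nu1] v1].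
  exists (-1); split; first by rewrite mulrNN mulr1.
  move=> w wr cw; apply: fin_core => //.
  have nw : ~~ (anc u w && ~~ anc v w).
    apply/negP => /andP [uw nvw]; case/orP: (anc_chain cw1 cw) => h.
      by move: nu1; rewrite (anc_trans uw h).
    by move: nvw; rewrite (anc_trans v1 h).
  move: nw; rewrite /sgn; case: (anc u w); case: (anc v w) => //= _.
  + by left; rewrite subrr mulr0.
  + by right; rewrite sub0r mulrNN mulr1.
  + by left; rewrite subrr mulr0.
exists 1; split; first by rewrite mulr1.
move=> w wr cw; apply: fin_core => //.
move: (none w); rewrite /= wr cw /sgn /=; case: (anc u w); case: (anc v w) => //= _.
+ by left; rewrite subrr mulr0.
+ by right; rewrite subr0 mulr1.
+ by left; rewrite subrr mulr0.
Qed.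

Lemma ftermE sg dr dx k : sg * sg = 1 ->
  fterm dr dx k = (sg * dr) * (sg * dr) * Op k k + (sg * dx) * (sg * dx) * Oq k k
     + 2 * ((sg * dr) * (sg * dx)) * Opq k k.
Proof.
move=> hs; have q : forall a b, (sg * a) * (sg * b) = a * b by move=> a b; rewrite mulrACA hs mul1r.
by rewrite !q /fterm !expr2.
Qed.

Lemma Fmono sg dr dx dr' dx' k : sg * sg = 1 -> 0 <= Op k k -> 0 <= Oq k k -> 0 <= Opq k k ->
  0 <= sg * dr' -> sg * dr' <= sg * dr -> 0 <= sg * dx' -> sg * dx' <= sg * dx ->
  fterm dr' dx' k <= fterm dr dx k.
Proof.
move=> hs h1 h2 h3 a1 a2 b1 b2; rewrite !(ftermE _ _ _ hs).
move: a1 a2 b1 b2; set X := sg * dr; set Y := sg * dx; set X' := sg * dr'; set Y' := sg * dx' => a1 a2 b1 b2.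
have a0 : 0 <= X by apply: le_trans a2.
have b0 : 0 <= Y by apply: le_trans b2.
have e1 : X' * X' <= X * X by apply: ler_pM.
have e2 : Y' * Y' <= Y * Y by apply: ler_pM.
have e3 : X' * Y' <= X * Y by apply: ler_pM.
apply: lerD; first apply: lerD.
- exact: ler_wpM2r.
- exact: ler_wpM2r.
- apply: ler_wpM2r => //; apply: ler_wpM2l => //.
Qed.

Lemma Flt sg dr dx dr' dx' k rho xi : sg * sg = 1 -> 0 <= Op k k -> 0 <= Oq k k -> 0 <= Opq k k ->
  0 < Op k k + Oq k k -> 0 < rho -> 0 < xi ->
  0 <= sg * dr' -> sg * dr' + rho <= sg * dr -> 0 <= sg * dx' -> sg * dx' + xi <= sg * dx ->
  fterm dr' dx' k < fterm dr dx k.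
Proof.
move=> hs h1 h2 h3 h4 rp xp a1 a2 b1 b2; rewrite !(ftermE _ _ _ hs).
move: a1 a2 b1 b2; set X := sg * dr; set Y := sg * dx; set X' := sg * dr'; set Y' := sg * dx' => a1 a2 b1 b2.
have a0 : 0 <= X by lra.
have b0 : 0 <= Y by lra.
have e1 : X' * X' < X * X by apply: ltr_pM; lra.
have e2 : Y' * Y' < Y * Y by apply: ltr_pM; lra.
have e3 : X' * Y' <= X * Y by apply: ler_pM; lra.
apply: ltr_leD; last first.
  apply: ler_wpM2r => //; apply: ler_wpM2l => //.
have [op0|opp] := eqVneq (Op k k) 0.
  rewrite op0 !mulr0 !add0r; rewrite op0 add0r in h4; by rewrite ltr_pM2r.
apply: ltr_leD; last by apply: ler_wpM2r => //; apply: ltW.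
by rewrite ltr_pM2r // lt_def opp.
Qed.

Lemma rho_pos (wr : V -> V -> R) : (forall a b, E a b -> 0 < wr a b) -> forall w, w != root -> 0 < rhoE E wr w.
Proof. by move=> wp w wr0; apply: wp; apply: parE. Qed.

Lemma diff_bounds (wr : V -> V -> R) u v u' v' k sg : (forall a b, E a b -> 0 < wr a b) ->
  (forall w, w != root -> anc (lift ord0 k) w -> 0 <= sg * sgn u' v' w /\ sg * sgn u' v' w <= sg * sgn u v w) ->
  0 <= sg * (rowv wr u' k - rowv wr v' k) /\ sg * (rowv wr u' k - rowv wr v' k) <= sg * (rowv wr u k - rowv wr v k).
Proof.
move=> wp hb; rewrite !rowv_diff !mulr_sumr; split.
  apply: sumr_ge0 => w /andP [wr0 cw]; rewrite mulrCA; apply: mulr_ge0.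
    exact: ltW (rho_pos wp wr0).
  by case: (hb w wr0 cw).
apply: ler_sum => w /andP [wr0 cw]; rewrite !(mulrCA sg); apply: ler_wpM2l.
  exact: ltW (rho_pos wp wr0).
by case: (hb w wr0 cw).
Qed.

Lemma diff_strict (wr : V -> V -> R) u v u' v' k sg w0 : (forall a b, E a b -> 0 < wr a b) ->
  (forall w, w != root -> anc (lift ord0 k) w -> 0 <= sg * sgn u' v' w /\ sg * sgn u' v' w <= sg * sgn u v w) ->
  w0 != root -> anc (lift ord0 k) w0 -> sg * sgn u v w0 = 1 -> sgn u' v' w0 = 0 ->
  sg * (rowv wr u' k - rowv wr v' k) + rhoE E wr w0 <= sg * (rowv wr u k - rowv wr v k).
Proof.
move=> wp hb w0r cw0 s1 s0; rewrite !rowv_diff !mulr_sumr.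
set P := fun w => (w != root) && anc (lift ord0 k) w.
have H : rhoE E wr w0 <= \sum_(w | P w) (sg * (rhoE E wr w * sgn u v w) - sg * (rhoE E wr w * sgn u' v' w)).
  rewrite (bigD1 w0) /=; last by rewrite /P w0r cw0.
  rewrite !(mulrCA sg) s1 s0 !mulr0 subr0 mulr1 lerDl.
  apply: sumr_ge0 => w /andP [/andP [wr0 cw] _]; rewrite !(mulrCA sg) -mulrBr; apply: mulr_ge0.
    exact: ltW (rho_pos wp wr0).
  by case: (hb w wr0 cw) => _ h; rewrite subr_ge0.
move: H; rewrite sumrB; lra.
Qed.

Hypotheses (Opd : forall k, 0 <= Op k k) (Oqd : forall k, 0 <= Oq k k) (Opqd : forall k, 0 <= Opq k k)
  (Opos : forall k, 0 < Op k k + Oq k k).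

Lemma phi_lt u v u' v' :
  (forall w, sgn u' v' w != 0 -> sgn u' v' w = sgn u v w) ->
  (exists w0, sgn u v w0 != 0 /\ sgn u' v' w0 = 0) ->
  phi E r x Op Oq Opq u' v' < phi E r x Op Oq Opq u v.
Proof.
move=> H1 [w0 [n0 z0]].
have w0r : w0 != root by apply: contraNneq n0 => ->; rewrite sgn_root.
have h0 : ord0 != w0 by rewrite eq_sym.
case: (unlift_some h0) => k0 ek0 _.
have per : forall k, exists sg, [/\ sg * sg = 1,
   (forall w, w != root -> anc (lift ord0 k) w -> 0 <= sg * sgn u' v' w /\ sg * sgn u' v' w <= sg * sgn u v w) &
   (forall w, w != root -> anc (lift ord0 k) w -> sgn u v w != 0 -> sg * sgn u v w = 1)].
  move=> k; case: (@mono_core u v (lift ord0 k) _ H1) => sg [hs P]; exists sg; split=> //.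
    by move=> w wr cw; case: (P w wr cw).
  by move=> w wr cw; case: (P w wr cw).
rewrite !phi_formula (bigD1 k0) //= [X in _ < X](bigD1 k0) //=.
apply: ltr_leD.
  case: (per k0) => sg [hs hb h1].
  have cw0 : anc (lift ord0 k0) w0 by rewrite -ek0 anc_refl.
  have s1 := h1 w0 w0r cw0 n0.
  case: (@diff_bounds r _ _ _ _ _ _ r_pos hb) => a1 _.
  case: (@diff_bounds x _ _ _ _ _ _ x_pos hb) => b1 _.
  apply: (Flt (rho := rhoE E r w0) (xi := rhoE E x w0) hs) => //.
  - exact: rho_pos.
  - exact: rho_pos.
  - exact: diff_strict.
  - exact: diff_strict.
apply: ler_sum => k _; case: (per k) => sg [hs hb _].
case: (@diff_bounds r _ _ _ _ _ _ r_pos hb) => a1 a2.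
case: (@diff_bounds x _ _ _ _ _ _ x_pos hb) => b1 b2.
by apply: (Fmono hs).
Qed.
End Phi.

Local Open Scope ring_scope.

Lemma disj (T : eqType) (s1 s2 : seq T) w : uniq (s1 ++ s2) -> w \in s1 -> w \in s2 -> False.
Proof. rewrite cat_uniq => /and3P [_ h _] w1 w2; apply: (negP h); apply/hasP; by exists w. Qed.

Section PathS.
Variables (R : realFieldType) (n : nat) (E : rel 'I_n.+1).
Notation V := 'I_n.+1.
Notation root := (ord0 : V).
Hypothesis tE : tree_on [set: V] E.
Notation par := (par E).
Notation anc := (anc E).
Notation sgn := (@sgnD R n E).

Definition child (x y : V) := if y == par x then x else y.
Fixpoint chs (x : V) (p : seq V) : seq V :=
  if p is y :: p' then child x y :: chs y p' else [::].

Lemma sgn_stepE x y w : E x y -> sgn x y w = if y == par x then (w == x)%:R else - (w == y)%:R.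
Proof.
move=> e; case: (y =P par x) => [ey|ny].
  have xr : x != root by apply: contraTneq e => ex; rewrite ey ex par_root (iE tE).
  rewrite /sgn ey (anc_par tE w xr); case: (w =P x) => [->|] /=.
    by rewrite (negbTE (anc_par_not tE xr)) subr0.
  by rewrite subrr.
case/orP: (T1 tE e) => [/eqP /ny //|/eqP ex].
have yr : y != root by apply: contraTneq e => ey; rewrite ex ey par_root (iE tE).
rewrite /sgn ex (anc_par tE w yr); case: (w =P y) => [->|] /=.
  by rewrite (negbTE (anc_par_not tE yr)) sub0r.
by rewrite subrr oppr0.
Qed.

Lemma sgn_step x y w : E x y -> (sgn x y w != 0) = (w == child x y).
Proof.
move=> e; rewrite sgn_stepE // /child; case: (y == par x); case: (w =P _) => _ //=.
- by rewrite oner_eq0.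
- by rewrite eqxx.
- by rewrite oppr_eq0 oner_eq0.
- by rewrite oppr0 eqxx.
Qed.

Lemma sgn_tel x y z w : sgn x z w = sgn x y w + sgn y z w.
Proof. rewrite /sgnD; ring. Qed.

Lemma L1 x p w : path E x p -> sgn x (last x p) w != 0 -> w \in chs x p.
Proof.
elim: p x => [|y p IH] x /=; first by rewrite /sgnD subrr eqxx.
case/andP => e pp; rewrite (sgn_tel _ y) inE.
case: (w =P child x y) => //= nw h; apply: IH => //; apply: contraNneq h => ->.
by rewrite addr0 -[_ == 0]negbK sgn_step //; apply/eqP.
Qed.

Lemma chs_sub x p w : w \in chs x p -> w \in x :: p.
Proof.
elim: p x => [|y p IH] x //=; rewrite inE => /orP [/eqP ->|h].
  by rewrite /child; case: (y == par x); rewrite !inE eqxx ?orbT.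
by move: (IH y h); rewrite !inE => ->; rewrite orbT.
Qed.

Lemma L2 x p w : path E x p -> uniq (chs x p) -> w \in chs x p -> sgn x (last x p) w != 0.
Proof.
elim: p x => [|y p IH] x //=.
case/andP => e pp /andP [nc uc]; rewrite inE (sgn_tel _ y).
case: (w =P child x y) => [->|nw] /= h.
  have z : sgn y (last y p) (child x y) = 0 by apply/eqP; apply: contraNT nc => hh; exact: L1 pp hh.
  by rewrite z addr0 sgn_step.
have z : sgn x y w = 0 by apply/eqP; rewrite -(negbK (_ == 0)) sgn_step //; apply/eqP.
by rewrite z add0r; apply: IH.
Qed.

Lemma L3 x p : path E x p -> uniq (x :: p) -> uniq (chs x p).
Proof.
elim: p x => [|y p IH] x //=.
case/andP => e pp /andP [xn up]; rewrite (IH y pp up) andbT.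
rewrite /child; case: (y =P par x) => [ey|ny].
  apply: contra xn => /chs_sub; by rewrite inE.
case/orP: (T1 tE e) => [/eqP /ny //|/eqP ex].
case: p pp up xn {IH} => [|z p] //= /andP [e2 pp] /andP [yn up] xn.
rewrite inE negb_or; apply/andP; split.
  rewrite /child; case: (z =P par y) => [ez|_].
    by move: xn; rewrite ex -ez !inE eqxx orbT.
  by apply: contra yn => /eqP <-; rewrite inE eqxx.
apply: contra yn => /chs_sub; by rewrite inE.
Qed.

Lemma chs_cat x p1 p2 : chs x (p1 ++ p2) = chs x p1 ++ chs (last x p1) p2.
Proof. by elim: p1 x => [|y p IH] x //=; rewrite IH. Qed.

Lemma size_chs x p : size (chs x p) = size p.
Proof. by elim: p x => [|y p IH] x //=; rewrite IH. Qed.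

Lemma split3 u q1 q2 q3 : path E u (q1 ++ q2 ++ q3) -> uniq (u :: q1 ++ q2 ++ q3) -> q1 ++ q3 != [::] ->
  (forall w, sgn (last u q1) (last (last u q1) q2) w != 0 ->
      sgn (last u q1) (last (last u q1) q2) w = sgn u (last (last (last u q1) q2) q3) w) /\
  (exists w0, sgn u (last (last (last u q1) q2) q3) w0 != 0 /\
              sgn (last u q1) (last (last u q1) q2) w0 = 0).
Proof.
move=> pp up ne.
have uc := L3 pp up.
rewrite !chs_cat in uc.
move: pp; rewrite !cat_path => /and3P [p1 p2 p3].
set u' := last u q1 in p2 uc *; set v' := last u' q2 in p3 uc *; set v := last v' q3.
have tel : forall w, sgn u v w = sgn u u' w + sgn u' v' w + sgn v' v w.
  by move=> w; rewrite -(sgn_tel _ u') -(sgn_tel _ v').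
have uc1 : uniq (chs u q1) by move: uc; rewrite cat_uniq => /andP [].
have uc3 : uniq (chs v' q3) by move: uc; rewrite !cat_uniq => /and3P [_ _ /and3P [_ _ ->]].
have uc23 : uniq (chs u' q2 ++ chs v' q3) by move: uc; rewrite cat_uniq => /and3P [_ _ ->].
have Z : forall x p w, path E x p -> w \notin chs x p -> sgn x (last x p) w = 0.
  by move=> x p w hp hw; apply/eqP; apply: contraNT hw => hh; exact: L1 hp hh.
have D1 : forall w, w \in chs u q1 -> w \in chs u' q2 -> False.
  by move=> w h1 h2; apply: (disj uc h1); rewrite mem_cat h2.
have D2 : forall w, w \in chs u q1 -> w \in chs v' q3 -> False.
  by move=> w h1 h2; apply: (disj uc h1); rewrite mem_cat h2 orbT.
have D3 : forall w, w \in chs u' q2 -> w \in chs v' q3 -> False.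
  by move=> w h1 h2; apply: (disj uc23 h1).
split.
  move=> w h; have h2 := L1 p2 h.
  rewrite tel (Z _ _ _ p1) ?(Z _ _ _ p3) ?add0r ?addr0 //.
    by apply/negP => h3; apply: (D3 _ h2 h3).
  by apply/negP => h1; apply: (D1 _ h1 h2).
have [w0 hw0] : exists w0, w0 \in chs u q1 ++ chs v' q3.
  case e: (chs u q1 ++ chs v' q3) => [|a s]; last by exists a; rewrite mem_head.
  move: (congr1 size e); rewrite size_cat !size_chs /=; move: ne; rewrite -size_eq0 size_cat => h1 h2; by move: h1; rewrite h2.
exists w0; rewrite mem_cat in hw0; case/orP: hw0 => h.
  have n1 := L2 p1 uc1 h.
  rewrite tel (Z _ _ _ p2) ?(Z _ _ _ p3) ?addr0 //.
    by apply/negP => h3; apply: (D2 _ h h3).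
  by apply/negP => h3; apply: (D1 _ h h3).
have n3 := L2 p3 uc3 h.
rewrite tel (Z _ _ _ p1) ?(Z _ _ _ p2) ?add0r //.
  by apply/negP => h3; apply: (D3 _ h3 h).
by apply/negP => h3; apply: (D2 _ h3 h).
Qed.
End PathS.

Local Open Scope ring_scope.

Lemma upath (T : finType) (e : rel T) x y : connect e x y ->
  exists p, [/\ path e x p, uniq (x :: p) & last x p = y].
Proof. case/connectP => p pp ->; case: (shortenP pp) => p' pp' up' _; by exists p'. Qed.

Lemma path_conn_last (T : finType) (e : rel T) x p z : path e x p -> z \in x :: p -> connect e z (last x p).
Proof.
elim: p x z => [|y p IH] x z /=; first by rewrite inE => _ /eqP ->.
case/andP => e1 pp; rewrite inE => /orP [/eqP ->|h].
  apply: connect_trans (connect1 e1) _; apply: IH pp _; exact: mem_head.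
exact: IH.
Qed.

Lemma path_conn_first (T : finType) (e : rel T) x p z : path e x p -> z \in x :: p -> connect e x z.
Proof.
elim: p x => [|y p IH] x /=; first by rewrite inE => _ /eqP ->.
case/andP => e1 pp; rewrite inE => /orP [/eqP ->|h]; first exact: connect0.
exact: connect_trans (connect1 e1) (IH y pp h).
Qed.

Lemma diag_nonneg (R : realFieldType) n (Op Oq Opq : 'M[R]_n) :
  (forall i j : 'I_n, i != j -> [/\ Op i j = 0, Oq i j = 0 & Opq i j = 0]) ->
  joint_cov Op Oq Opq -> forall k, 0 <= Op k k /\ 0 <= Oq k k.
Proof.
move=> dg [_ _ J] k.
pose e : 'cV[R]_n := \col_i (i == k)%:R.
have q : forall Y : 'M[R]_n, (forall i j, i != j -> Y i j = 0) -> (e^T *m Y *m e) 0 0 = Y k k.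
  move=> Y dY; have q' : (e^T *m Y *m (e^T)^T) 0 0 = Y k k.
    rewrite diag_mul // (bigD1 k) //= big1 ?addr0.
      by rewrite /e !mxE eqxx mulr1 mul1r.
    by move=> l lk; rewrite /e !mxE (negbTE lk) mul0r mulr0.
  by rewrite trmxK in q'.
split.
  move: (J e 0); rewrite ?mulmx0 ?trmx0 ?mul0mx ?mul0rn ?addr0 ?add0r q //.
  by move=> i j h; case: (dg i j h).
move: (J 0 e); rewrite ?mulmx0 ?trmx0 ?mul0mx ?mul0rn ?addr0 ?add0r q //.
by move=> i j h; case: (dg i j h).
Qed.

Lemma phi_sym (R : realFieldType) (n : nat) (E : rel 'I_n.+1) (tE : tree_on [set: 'I_n.+1] E)
  (r x : 'I_n.+1 -> 'I_n.+1 -> R) (Op Oq Opq : 'M[R]_n)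
  (rs : forall a b, r a b = r b a) (xs : forall a b, x a b = x b a)
  (rp : forall a b, E a b -> 0 < r a b) (xp : forall a b, E a b -> 0 < x a b)
  (dg : forall i j : 'I_n, i != j -> [/\ Op i j = 0, Oq i j = 0 & Opq i j = 0]) a b :
  phi E r x Op Oq Opq a b = phi E r x Op Oq Opq b a.
Proof. rewrite !(phi_formula tE rs xs rp xp dg); apply: eq_bigr => k _; rewrite /fterm; ring. Qed.

Unset Implicit Arguments.
Theorem theorem4 (R : realFieldType) (n : nat)
    (E : rel 'I_n.+1) (r x : 'I_n.+1 -> 'I_n.+1 -> R)
    (Op Oq Opq : 'M[R]_n) (M : {set 'I_n.+1}) (TM : rel 'I_n.+1) :
  is_tree E ->
  degree E ord0 = 1%N ->
  (forall a b, r a b = r b a) -> (forall a b, x a b = x b a) ->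
  (forall a b, E a b -> 0 < r a b /\ 0 < x a b) ->
  joint_cov Op Oq Opq ->
  (forall i j : 'I_n, i != j -> [/\ Op i j = 0, Oq i j = 0 & Opq i j = 0]) ->
  (forall i : 'I_n, 0 <= Opq i i) ->
  (forall i : 'I_n, 0 < Op i i + Oq i i) ->
  ord0 \notin M ->
  (forall m, m \in M -> (degree E m <= 2)%N) ->
  is_MST (~: M) (phi E r x Op Oq Opq) TM ->
  (forall a b, a \notin M -> b \notin M -> E a b -> TM a b) /\
  (forall a b, TM a b -> ~~ E a b ->
     exists s : seq 'I_n.+1,
       [/\ path E a (rcons s b), uniq (a :: rcons s b) & all (mem M) s]).
Proof.
move=> hT _ rs xs rxp jc dg Opqd Opos _ _ hMST.
have tE : tree_on [set: 'I_n.+1] E := hT.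
have r_pos : forall a b, E a b -> 0 < r a b by move=> a b e; case: (rxp a b e).
have x_pos : forall a b, E a b -> 0 < x a b by move=> a b e; case: (rxp a b e).
have Od := diag_nonneg dg jc.
have Opd : forall k, 0 <= Op k k by move=> k; case: (Od k).
have Oqd : forall k, 0 <= Oq k k by move=> k; case: (Od k).
set ph := phi E r x Op Oq Opq.
have PL := phi_lt tE rs xs r_pos x_pos dg Opd Oqd Opqd Opos.
have psym : forall a b, ph a b = ph b a by move=> a b; exact: (phi_sym tE rs xs r_pos x_pos dg).
case: hMST => tTM' minTM.
have tTM : tree_on (~: M) TM := tTM'.
have [sTM iTM inTM cTM _] := tTM.
have [sE iE' _ cE _] := tE.
have EX : forall u v p q, TM u v -> p \in ~: M -> q \in ~: M -> p != q -> ~~ TM p q ->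
   connect (rem_e TM u v) u p -> connect (rem_e TM u v) v q -> ph u v <= ph p q.
  move=> u v p q e pO qO pq npq c1 c2.
  have t' := exch tTM e pO qO pq npq c1 c2.
  have uv : u != v by apply: contraTneq e => ->; rewrite iTM.
  have := minTM _ t'; rewrite (gw_exch sTM psym e uv pq npq); lra.
split.
- move=> a b aM bM eab; apply/negPn/negP => ntm.
  have aO : a \in ~: M by rewrite inE aM.
  have bO : b \in ~: M by rewrite inE bM.
  set GE := rem_e E a b.
  have sGE : symmetric GE := rem_sym a b sE.
  have nab := TL tE eab.
  have [p [pp up lp]] := upath (cTM a b aO bO).
  have := @cross _ TM [pred w | connect GE a w] p a pp up (connect0 _ _).
  case; first by rewrite lp inE.
  move=> u [v [tuv uS vS c1 c2]]; rewrite lp in c2.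
  have ab : a != b by apply: contraTneq eab => ->; rewrite iE'.
  have h1 : ph u v <= ph a b.
    apply: (EX u v a b) => //.
    by rewrite (sym_connect_sym (rem_sym u v sTM)).
  have h2 : ph a b < ph u v.
    have cua : connect GE u a by rewrite (sym_connect_sym sGE).
    have [p1 [pp1 up1 lp1]] := upath cua.
    have cbv : connect GE b v.
      case/orP: (reachO tE eab (in_setT v)) => h.
        by exfalso; move: vS; rewrite inE /= (sym_connect_sym sGE) h.
      by rewrite (sym_connect_sym sGE).
    have [p3 [pp3 up3 lp3]] := upath cbv.
    have sub : subrel GE E by move=> y z; apply: rem_sub.
    have ne : p1 ++ p3 != [::].
      case: p1 pp1 up1 lp1 => [|y1 p1'] //= _ _ eu.
      case: p3 pp3 up3 lp3 => [|y3 p3'] //= _ _ ev.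
      by move: ntm; rewrite -eu ev tuv.
    have := split3 R tE (u:=u) (q1:=p1) (q2:=[:: b]) (q3:=p3) _ _ ne.
    case.
    + rewrite cat_path (sub_path sub pp1) lp1 /= eab; exact: (sub_path sub pp3).
    + rewrite (_ : u :: p1 ++ [:: b] ++ p3 = (u :: p1) ++ (b :: p3)) // cat_uniq up1 up3 andbT.
      apply/hasPn => z zin; apply/negP => zin1.
      have e1 := path_conn_last pp1 zin1; rewrite lp1 in e1.
      have e2 := path_conn_first pp3 zin.
      apply: (negP nab); apply: (connect_trans (_ : connect GE a z) (_ : connect GE z b)).
        by rewrite (sym_connect_sym sGE).
      by rewrite (sym_connect_sym sGE).
    + move=> H1 H2; rewrite lp1 /= lp3 in H1 H2; exact: PL H1 H2.
  by move: (lt_le_trans h2 h1); rewrite ltxx.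
- move=> a b tab neab.
  move: (inTM _ _ tab) => /andP [aO bO].
  have [p [pp up lp]] := upath (cE a b (in_setT a) (in_setT b)).
  have ab : a != b by apply: contraTneq tab => ->; rewrite iTM.
  case/lastP: p pp up lp => [|s y] pp up lp; first by move: ab; rewrite -lp /= eqxx.
  rewrite last_rcons in lp; subst y.
  exists s; split => //.
  case: (boolP (all (mem M) s)) => // hall; exfalso.
  case/allPn: hall => c cs cM.
  have cO : c \in ~: M by rewrite inE.
  have ca : c != a.
    apply: contraTneq cs => ->; move: up => /andP [an _]; apply: contra an.
    by rewrite mem_rcons inE => ->; rewrite orbT.
  have cb : c != b.
    apply: contraTneq cs => ->; move: up; rewrite /= rcons_uniq => /and3P [_ h _] //.
  set G := rem_e TM a b.
  have sG : symmetric G := rem_sym a b sTM.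
  have nab := TL tTM tab.
  case: (splitPr cs) pp up => s1 s2 pp up.
  have eq1 : rcons (s1 ++ c :: s2) b = rcons s1 c ++ rcons s2 b by rewrite -!cats1 -!catA.
  rewrite eq1 in pp up.
  case/orP: (reachO tTM tab cO) => hc.
  + have ncb : ~~ TM c b.
      apply/negP => tcb; apply: (negP nab).
      apply: connect_trans (_ : connect G a c) (connect1 (_ : G c b)).
        by rewrite (sym_connect_sym sG).
      by rewrite /G /rem_e tcb (negbTE ca) (negbTE cb).
    have h1 : ph a b <= ph c b.
      apply: (EX a b c b) => //; first by rewrite (sym_connect_sym sG).
    have h2 : ph c b < ph a b.
      have := split3 R tE (u:=a) (q1:=rcons s1 c) (q2:=rcons s2 b) (q3:=[::]).
      rewrite !cats0; case => //; first by rewrite -size_eq0 size_rcons.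
      move=> H1 H2; rewrite !last_rcons /= in H1 H2; exact: PL H1 H2.
    by move: (lt_le_trans h2 h1); rewrite ltxx.
  + have nac : ~~ TM a c.
      apply/negP => tac; apply: (negP nab).
      apply: connect_trans (connect1 (_ : G a c)) (_ : connect G c b) => //.
      by rewrite /G /rem_e tac (negbTE cb) (negbTE ab) !andbF.
    have h1 : ph a b <= ph a c.
      apply: (EX a b a c) => //; first by rewrite eq_sym.
      by rewrite (sym_connect_sym sG).
    have h2 : ph a c < ph a b.
      have := split3 R tE (u:=a) (q1:=[::]) (q2:=rcons s1 c) (q3:=rcons s2 b).
      case => //; first by rewrite /= -size_eq0 size_rcons.
      move=> H1 H2; rewrite /= !last_rcons in H1 H2; exact: PL H1 H2.
    by move: (lt_le_trans h2 h1); rewrite ltxx.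
Qed.
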